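(* There is a mapping $\Phi :(\mathfrak{M}, \supseteq )\rightarrow (\mathfrak{M_H}, \supseteq )$ such that for every $I\in \mathfrak{M}$, $\Phi (I)\supseteq I$ and $\Phi (I)\approx _{\mathrm{sep}} I$.
   Context: All ideals on $\omega$ considered are proper and contain all finite subsets of $\omega$; they are viewed as subsets of the Cantor space $2^\omega=\mathcal{P}(\omega)$. $\mathfrak{M}$ is the set of all ideals on $\omega$ that are meager subsets of $2^\omega$, ordered by reverse inclusion $\supseteq$ (so larger ideals are stronger conditions). For $X\subseteq\omega$ and an ideal $I$, $I\upharpoonright X=\{A\in I: A\subseteq X\}$, and $I^+=\mathcal{P}(\omega)\setminus I$. An ideal $I$ is hereditary meager if for every $X\in I^+$ the set $I\upharpoonright X$ is meager in $2^X$; $\mathfrak{M_H}$ is the set of hereditary meager ideals ordered by $\supseteq$. Two meager ideals are compatible (in $(\mathfrak{M},\supseteq)$) if some meager ideal contains both, and disjoint otherwise. For $I,J\in\mathfrak{M}$, $I\approx_{\mathrm{sep}}J$ means: for every meager ideal $K$, $K$ is disjoint with $I$ iff $K$ is disjoint with $J$. *)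

(* Defs.v *)
From HB Require Import structures.
From mathcomp Require Import all_boot all_order all_algebra.
From mathcomp Require Import all_classical all_reals.
From mathcomp Require Import topology cantor.
Set Implicit Arguments. Unset Strict Implicit. Unset Printing Implicit Defensive.
Local Open Scope classical_set_scope.

(* Subsets of omega are points of the Cantor space 2^omega = nat -> bool
   (characteristic functions), with the product topology (cantor_space). *)

Definition nowhere_dense (T : topologicalType) (A : set T) : Prop :=
  interior (closure A) = set0.

Definition meager (T : topologicalType) (A : set T) : Prop :=
  exists F : nat -> set T,
    (forall n, nowhere_dense (F n)) /\ A `<=` \bigcup_n F n.

Definition subsetb (A B : cantor_space) : Prop := forall n, A n -> B n.
Definition unionb (A B : cantor_space) : cantor_space := fun n => A n || B n.
Definition finiteb (A : cantor_space) : Prop := exists N, forall n, A n -> (n < N)%N.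

Definition ideal (I : set cantor_space) : Prop :=
  [/\ ~ I (fun _ => true),
      (forall A, finiteb A -> I A),
      (forall A B, subsetb A B -> I B -> I A) &
      (forall A B, I A -> I B -> I (unionb A B))].

Definition meager_ideal (I : set cantor_space) : Prop :=
  ideal I /\ meager I.

Definition cantor_sub (X : cantor_space) : Type :=
  prod_topology (fun _ : {n : nat | X n} => bool).

Definition restr (I : set cantor_space) (X : cantor_space) : set (cantor_sub X) :=
  (fun A : cantor_space => (fun i : {n : nat | X n} => A (proj1_sig i)) : cantor_sub X)
    @` [set A | I A /\ subsetb A X].

Definition hereditary_meager (I : set cantor_space) : Prop :=
  meager_ideal I /\ forall X : cantor_space, ~ I X -> @meager (prod_topology (fun _ : {n : nat | X n} => bool)) (@restr I X).

Definition compatible (I J : set cantor_space) : Prop :=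
  exists K, meager_ideal K /\ I `<=` K /\ J `<=` K.
Definition disjoint_ideals (I J : set cantor_space) : Prop := ~ compatible I J.

Definition sep_equiv (I J : set cantor_space) : Prop :=
  forall K, meager_ideal K -> (disjoint_ideals K I <-> disjoint_ideals K J).

(* Main.v *)
Require Import Defs.
From mathcomp Require Import all_boot all_classical topology cantor.
Local Open Scope classical_set_scope.

Section Cyl.
Variable T : eqType.
Local Notation P := (prod_topology (fun _ : T => bool)).

Definition cyl (x : P) (s : seq T) : set P := [set y | forall i, i \in s -> y i = x i].

Lemma cyl_nbhs (x : P) s : nbhs x (cyl x s).
Proof.
elim: s => [|a s IH].
  have -> : cyl x [::] = setT by apply/seteqP; split => y //= _ i.
  exact: filterT.
have h : nbhs x (proj a @^-1` [set x a]).
  apply: (@proj_continuous T (fun _ => bool) a x).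
  by apply/principal_filterP.
apply: filterS (filterI h IH) => y [ya ys] i.
by rewrite inE => /orP [/eqP -> //| /ys].
Qed.

Lemma nbhs_cyl (x : P) U : nbhs x U -> exists s, cyl x s `<=` U.
Proof.
pose G := filter_from [set: seq T] (cyl x).
have GF : Filter G.
  apply: filter_from_filter; first by exists [::].
  move=> s1 s2 _ _; exists (s1 ++ s2) => // y hy; split => i hi;
  by apply: hy; rewrite mem_cat hi ?orbT.
have : G --> x.
  apply/cvg_sup => i A /=.
  rewrite (@nbhsE (initial_topology (proj i : P -> bool))) => -[B [[C _ <-] Cx] BA].
  exists [:: i] => // y hy; apply: BA; rewrite /preimage /=; have -> : proj i y = proj i x by apply: hy; rewrite mem_head.
  done.
move=> /(_ U) h /h [s _ hs]; by exists s.
Qed.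


Lemma easy_meager (Q : nat -> seq T) (A : set P) :
  (forall (s : seq T) m, exists n, (m <= n)%N /\ forall i, i \in Q n -> i \notin s) ->
  (forall a, A a -> exists m, forall n, (m <= n)%N -> ~ (forall i, i \in Q n -> a i)) ->
  @meager P A.
Proof.
move=> HQ HA.
exists (fun m => [set a : P | forall n, (m <= n)%N -> ~ (forall i, i \in Q n -> a i)]).
split; last by move=> a /HA [m hm]; exists m.
move=> m; apply/seteqP; split => // x /= /nbhs_cyl [s hs].
have [n [mn dn]] := HQ s m.
pose x' : P := fun i => (i \in Q n) || x i.
have cx' : cyl x s x'.
  move=> i hi; rewrite /x'; case: (boolP (i \in Q n)) => //= /dn.
  by rewrite hi.
have [a [Fa ca]] := hs _ cx' _ (cyl_nbhs x' (Q n)).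
apply: (Fa n mn) => i hi; rewrite (ca i hi) /x' hi //.
Qed.
End Cyl.

Set Implicit Arguments. Unset Strict Implicit.

Definition contains (A : cantor_space) (q : seq nat) := forall i, i \in q -> A i.
Definition infinitely (A : cantor_space) (Q : nat -> seq nat) :=
  forall N, exists n, (N <= n)%N /\ contains A (Q n).
Definition good (Q : nat -> seq nat) (X : cantor_space) :=
  forall n, Q n != [::] /\ forall i, i \in Q n -> (n <= i)%N /\ X i.
Definition thin (L : set cantor_space) (X : cantor_space) :=
  exists Q, good Q X /\ forall A, L A -> ~ infinitely A Q.
Definition Phi (L : set cantor_space) : set cantor_space := [set X | ~ thin L X].

Lemma fat_good L Y Q : ~ thin L Y -> good Q Y -> exists A, L A /\ infinitely A Q.
Proof.
move=> fY gQ; apply: contrapT => hn; apply: fY; exists Q; split => // A LA iA.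
by apply: hn; exists A.
Qed.

Lemma inf_sub A Q : infinitely A Q ->
  exists phi : nat -> nat, forall k, (k <= phi k)%N /\ contains A (Q (phi k)).
Proof.
move=> iA; have [phi hphi] := choice iA; by exists phi.
Qed.

Lemma fat_inf L Y Q X : ~ thin L Y -> good Q X -> infinitely Y Q ->
  exists A, L A /\ infinitely A Q.
Proof.
move=> fY gQ /inf_sub [phi hphi].
have gQ' : good (fun k => Q (phi k)) Y.
  move=> k; have [ne hQ] := gQ (phi k); split => // i hi.
  have [/= ki _] := hQ i hi; split; last by have [_] := hphi k; apply.
  by apply: leq_trans ki; have [] := hphi k.
have [A [LA iA]] := fat_good fY gQ'; exists A; split => // N.
have [k [Nk cA]] := iA N; exists (phi k); split => //.
by apply: leq_trans Nk _; have [] := hphi k.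
Qed.

Lemma not_inf A Q : ~ infinitely A Q -> exists N, forall n, (N <= n)%N -> ~ contains A (Q n).
Proof.
move=> h; apply: contrapT => h2; apply: h => N; apply: contrapT => h3.
apply: h2; exists N => n Nn cA; apply: h3; by exists n.
Qed.

Lemma not_contains A q : ~ contains A q -> exists i, i \in q /\ ~~ A i.
Proof.
move=> h; apply: contrapT => h2; apply: h => i iq; apply: contrapT => Ai.
by apply: h2; exists i; split => //; apply/negP.
Qed.

Lemma fat_union L Y Z : ideal L -> ~ thin L Y -> ~ thin L Z -> ~ thin L (unionb Y Z).
Proof.
move=> [_ _ _ LU] fY fZ [Q [gQ hQ]].
have [iY|niY] := EM (infinitely Y Q).
  by have [A [LA iA]] := fat_inf fY gQ iY; apply: (hQ A LA).
have [iZ|niZ] := EM (infinitely Z Q).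
  by have [A [LA iA]] := fat_inf fZ gQ iZ; apply: (hQ A LA).
have [N1 h1] := not_inf niY; have [N2 h2] := not_inf niZ.
pose M := maxn N1 N2.
pose QY n := [seq i <- Q (n + M) | Y i].
pose QZ n := [seq i <- Q (n + M) | ~~ Y i].
have M1 n : (N1 <= n + M)%N by apply: leq_trans (leq_maxl _ _) (leq_addl _ _).
have M2 n : (N2 <= n + M)%N by apply: leq_trans (leq_maxr _ _) (leq_addl _ _).
have gY : good QY Y.
  move=> n; split.
    have [i [iq nZ]] := not_contains (h2 _ (M2 n)).
    have [_ /= ] := (gQ (n + M)).2 i iq; rewrite /unionb (negbTE nZ) orbF => Yi.
    apply/eqP => e; have : i \in QY n by rewrite mem_filter Yi iq.
    by rewrite e.
  move=> i; rewrite mem_filter => /andP [Yi iq]; split => //.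
  by apply: leq_trans (leq_addr M n) _; have [] := (gQ (n + M)).2 i iq.
have [A1 [LA1 iA1]] := fat_good fY gY.
have [phi hphi] := inf_sub iA1.
have gZ : good (fun k => QZ (phi k)) Z.
  move=> k; split.
    have [i [iq nY]] := not_contains (h1 _ (M1 (phi k))).
    apply/eqP => e; have : i \in QZ (phi k) by rewrite mem_filter nY iq.
    by rewrite e.
  move=> i; rewrite mem_filter => /andP [nY iq].
  have [le Ui] := (gQ (phi k + M)).2 i iq.
  split; last by move: Ui; rewrite /unionb (negbTE nY).
  apply: leq_trans le; apply: leq_trans (leq_addr M _); by have [] := hphi k.
have [A2 [LA2 iA2]] := fat_good fZ gZ.
apply: (hQ _ (LU _ _ LA1 LA2)) => N.
have [k [Nk cA2]] := iA2 N; exists (phi k + M); split.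
  by apply: leq_trans (leq_addr _ _); apply: leq_trans Nk _; have [] := hphi k.
move=> i iq; rewrite /unionb; case: (boolP (Y i)) => Yi.
  by have [_ c] := hphi k; rewrite c // mem_filter Yi.
by rewrite cA2 ?orbT // mem_filter Yi.
Qed.

Definition bnd (s : seq nat) := foldr (fun a b => maxn a.+1 b) 0%N s.
Lemma bnd_gt s i : i \in s -> (i < bnd s)%N.
Proof.
elim: s => //= a s IH; rewrite inE => /orP [/eqP ->|/IH h].
  by rewrite leq_maxl.
by apply: leq_trans h (leq_maxr _ _).
Qed.

Definition agree (k K : nat) (t s : nat -> bool) (y : cantor_space) :=
  forall i, (i < K)%N -> y i = (if (i < k)%N then t i else s i).

Fixpoint allbl (k : nat) : seq (seq bool) :=
  if k is k'.+1 then map (cons true) (allbl k') ++ map (cons false) (allbl k') else [:: [::]].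

Lemma mem_allbl l : l \in allbl (size l).
Proof.
elim: l => [|b l IH] //=.
by case: b; rewrite mem_cat map_f ?orbT.
Qed.

Section Tal.
Variable F : nat -> set cantor_space.
Hypothesis ndF : forall n, nowhere_dense (F n).

Lemma step k K t s j : (k <= K)%N -> exists K' s', [/\ (K <= K')%N,
  (forall i, (k <= i < K)%N -> s' i = s i) &
  forall y, agree k K' t s' y -> ~ F j y].
Proof.
move=> kK.
pose y0 : cantor_space := fun i => if (i < k)%N then t i else s i.
have [y1 [Cy1 ny1]] : exists y1, cyl _ y0 (iota 0 K) y1 /\ ~ closure (F j) y1.
  apply: contrapT => h.
  have : interior (closure (F j)) y0.
    apply: filterS (@cyl_nbhs nat y0 (iota 0 K)) => y Cy; apply: contrapT => ny.
    by apply: h; exists y.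
  by rewrite (ndF j).
have [B [nB FB]] : exists B, nbhs y1 B /\ ~ (F j `&` B !=set0).
  apply: contrapT => h; apply: ny1 => B nB; apply: contrapT => h2.
  by apply: h; exists B.
have [s0 hs0] := @nbhs_cyl _ _ _ nB.
exists (maxn K (bnd s0)), y1; split.
- exact: leq_maxl.
- move=> i /andP [ki iK]; rewrite (Cy1 i) ?mem_iota ?add0n ?iK //.
  by rewrite /y0 ltnNge ki.
- move=> y ay Fy; apply: FB; exists y; split => //; apply: hs0 => i is0.
  have iK : (i < maxn K (bnd s0))%N.
    by apply: leq_trans (bnd_gt is0) (leq_maxr _ _).
  rewrite (ay i iK); case: ifP => // ik.
  rewrite (Cy1 i) ?mem_iota ?add0n /y0 ?ik //.
  by apply: leq_trans ik kK.
Qed.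

Lemma steps (cs : seq (seq bool * nat)) k K s : (k <= K)%N -> exists K' s', [/\ (K <= K')%N,
  (forall i, (k <= i < K)%N -> s' i = s i) &
  forall c, c \in cs -> forall y, agree k K' (fun i => nth false c.1 i) s' y -> ~ F c.2 y].
Proof.
elim: cs K s => [|c cs IH] K s kK.
  by exists K, s; split.
have [K1 [s1 [KK1 ss1 h1]]] := IH K s kK.
have [K2 [s2 [KK2 ss2 h2]]] := step (fun i => nth false c.1 i) s1 c.2 (leq_trans kK KK1).
exists K2, s2; split.
- exact: leq_trans KK1 KK2.
- move=> i /andP [ki iK]; rewrite ss2 ?ki ?ss1 ?ki //=.
  exact: leq_trans iK KK1.
- move=> c'; rewrite inE => /orP [/eqP -> //|c'cs] y ay.
  apply: (h1 _ c'cs) => i iK1; rewrite ay; last exact: leq_trans iK1 KK2.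
  case: ifP => // ik; rewrite ss2 // iK1 andbT leqNgt ik //.
Qed.

Lemma ext n k : exists K' (s' : nat -> bool), [/\ (k < K')%N, s' k &
  forall t j y, (j <= n)%N -> agree k K' t s' y -> ~ F j y].
Proof.
pose cs := [seq (l, j) | l <- allbl k, j <- iota 0 n.+1].
have [K' [s' [kK ss h]]] := steps cs (fun _ => true) (leqnSn k).
exists K', s'; split.
- exact: leq_trans (leqnn _) kK.
- by rewrite ss // leqnn ltnSn.
- move=> t j y jn ay.
  have hc : (mkseq t k, j) \in cs.
    apply/allpairsP; exists (mkseq t k, j); split => //.
      by have := mem_allbl (mkseq t k); rewrite size_mkseq.
    by rewrite mem_iota add0n ltnS jn.
  apply: (h _ hc) => i iK; rewrite ay //=; case: ifP => // ik.
  by rewrite nth_mkseq.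
Qed.

Variable L : set cantor_space.
Hypothesis iL : ideal L.
Hypothesis LF : L `<=` \bigcup_n F n.

Lemma tal_thin : thin L (fun _ => true).
Proof.
have ext' (nk : nat * nat) : exists p : nat * (nat -> bool), [/\ (nk.2 < p.1)%N, p.2 nk.2 &
  forall t j y, (j <= nk.1)%N -> agree nk.2 p.1 t p.2 y -> ~ F j y].
  by have [K' [s' h]] := ext nk.1 nk.2; exists (K', s').
have [e he] := choice ext'.
pose Kf := fix Kf n := if n is n'.+1 then (e (n', Kf n')).1 else 0%N.
pose S n := (e (n, Kf n)).2.
have KfS n : Kf n.+1 = (e (n, Kf n)).1 by [].
have hKS n : [/\ (Kf n < Kf n.+1)%N, S n (Kf n) &
    forall t j y, (j <= n)%N -> agree (Kf n) (Kf n.+1) t (S n) y -> ~ F j y].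
  by rewrite KfS; have [] := he (n, Kf n).
have Kinc n : (Kf n < Kf n.+1)%N by have [] := hKS n.
have Kge n : (n <= Kf n)%N.
  elim: n => // n IH; apply: leq_ltn_trans IH (Kinc n).
have Kmono m n : (m < n)%N -> (Kf m.+1 <= Kf n)%N.
  elim: n => // n IH; rewrite ltnS leq_eqVlt => /orP [/eqP -> //|/IH h].
  exact: leq_trans h (ltnW (Kinc n)).
have blk n n' i : (Kf n <= i < Kf n.+1)%N -> (Kf n' <= i < Kf n'.+1)%N -> n = n'.
  move=> /andP [a b] /andP [c d]; case: (ltngtP n n') => // h.
    by have := leq_trans (Kmono _ _ h) c; rewrite leqNgt b.
  by have := leq_trans (Kmono _ _ h) a; rewrite leqNgt d.
pose Q n := [seq i <- iota (Kf n) (Kf n.+1 - Kf n) | S n i].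
have memQ n i : (i \in Q n) = [&& S n i, Kf n <= i & i < Kf n.+1]%N.
  by rewrite mem_filter mem_iota subnKC // ltnW.
exists Q; split.
  move=> n; split.
    apply/eqP => e0; have : Kf n \in Q n.
      by rewrite memQ leqnn Kinc !andbT; have [] := hKS n.
    by rewrite e0.
  move=> i; rewrite memQ => /and3P [_ a _]; split => //.
  exact: leq_trans (Kge n) a.
move=> A LA iA.
pose B : cantor_space := fun i => A i && all (fun n => ~~ ((Kf n <= i) && (i < Kf n.+1))%N || S n i) (iota 0 i.+1).
have LB : L B.
  have [_ _ Ls _] := iL; apply: (Ls _ _ _ LA) => i /andP [] //.
have [m _ Fm] := LF LB.
have [n [mn cA]] := iA m.
have [_ _ hn] := hKS n.
apply: (hn B m B mn _ Fm) => i iK; case: ifP => // /negbT; rewrite -leqNgt => ki.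
have ib : (Kf n <= i < Kf n.+1)%N by rewrite ki iK.
case Si: (S n i).
  rewrite /B cA; last by rewrite memQ Si ki iK.
  rewrite andTb; apply/allP => n' _.
  case: (boolP ((Kf n' <= i) && (i < Kf n'.+1))%N) => //= ib'.
  by rewrite -(blk _ _ _ ib ib') Si.
rewrite /B; apply/negbTE; rewrite negb_and; apply/orP; right.
apply/allPn; exists n; first by rewrite mem_iota add0n ltnS (leq_trans (Kge n) ki).
by rewrite ib Si.
Qed.
End Tal.

Lemma talagrand L : meager_ideal L -> thin L (fun _ => true).
Proof.
move=> [iL [F [ndF LF]]]; exact: (tal_thin ndF iL LF).
Qed.



Lemma sub_Phi L : ideal L -> L `<=` Phi L.
Proof.
move=> _ X LX [Q [gQ hQ]]; apply: (hQ X LX) => N; exists N; split => //.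
by move=> i iq; have [_ /(_ i iq) []] := gQ N.
Qed.

Lemma Phi_ideal L : meager_ideal L -> ideal (Phi L).
Proof.
move=> [iL mL]; have [Lp Lf Ls LU] := iL; split.
- by move=> h; apply: h; apply: talagrand.
- by move=> A fA; apply: sub_Phi => //; apply: Lf.
- move=> A B sAB fB [Q [gQ hQ]]; apply: fB; exists Q; split => // n.
  have [ne h] := gQ n; split => // i iq; have [a b] := h i iq; split => //.
  exact: sAB.
- by move=> A B; apply: fat_union.
Qed.

Lemma Phi_meager L : meager_ideal L -> meager (Phi L).
Proof.
move=> mL; have [Q [gQ hQ]] := talagrand mL.
apply: (@easy_meager nat Q).
  move=> s m; exists (maxn m (bnd s)); split; first exact: leq_maxl.
  move=> i iq; apply/negP => is_; have [le _] := (gQ _).2 i iq.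
  have := bnd_gt is_; rewrite ltnNge; move/negP; apply.
  by apply: leq_trans le; apply: leq_maxr.
move=> a fa; have [N hN] : exists N, forall n, (N <= n)%N -> ~ contains a (Q n).
  apply: not_inf => ia; have [A [LA iA]] := fat_inf fa gQ ia.
  exact: (hQ A LA iA).
by exists N => n Nn h; apply: (hN n Nn) => i /h.
Qed.

Lemma Phi_hm L : meager_ideal L -> hereditary_meager (Phi L).
Proof.
move=> mL; split; first by split; [apply: Phi_ideal|apply: Phi_meager].
move=> X nX; have [Q [gQ hQ]] : thin L X by apply: contrapT.
pose Q' n := pmap (insub : nat -> option {n : nat | X n}) (Q n).
apply: (@easy_meager _ Q').
  move=> s m; exists (maxn m (bnd (map val s))); split; first exact: leq_maxl.
  move=> i; rewrite mem_pmap_sub => iq; apply/negP => is_.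
  have [le _] := (gQ _).2 _ iq.
  have := bnd_gt (map_f val is_); rewrite ltnNge; move/negP; apply.
  by apply: leq_trans le; apply: leq_maxr.
move=> a [Y [fY sYX] <-].
have [N hN] : exists N, forall n, (N <= n)%N -> ~ contains Y (Q n).
  apply: not_inf => ia; have [A [LA iA]] := fat_inf fY gQ ia.
  exact: (hQ A LA iA).
exists N => n Nn h; apply: (hN n Nn) => i iq.
have [_ Xi] := (gQ n).2 i iq.
have := h (exist _ i Xi); rewrite mem_pmap_sub /=; by apply.
Qed.

Lemma Phi_mono I L : I `<=` L -> Phi I `<=` Phi L.
Proof.
move=> IL X fX [Q [gQ hQ]]; apply: fX; exists Q; split => // A IA.
exact: hQ (IL _ IA).
Qed.

Theorem mainTheorem7 :
  exists Phi : set cantor_space -> set cantor_space,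
    forall I : set cantor_space, meager_ideal I ->
      [/\ hereditary_meager (Phi I), I `<=` Phi I & sep_equiv (Phi I) I].
Proof.
exists Phi => I mI; split.
- exact: Phi_hm.
- by apply: sub_Phi; case: mI.
move=> K mK; split => hd hc; apply: hd.
  have [L [mL [KL IL]]] := hc.
  exists (Phi L); split; first by have [] := Phi_hm mL.
  split; first by apply: subset_trans KL (sub_Phi _); case: mL.
  exact: Phi_mono.
have [L [mL [KL IL]]] := hc.
exists L; split => //; split => //.
by apply: subset_trans IL; apply: sub_Phi; case: mI.
Qed.
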